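(* Let $X$ be a proper geodesic metric space with a free, proper, cocompact, isometric action of a finitely generated group $\Gamma$ (with fixed finite symmetric generating set $S$), and let $P$ be a space with a proper $\Gamma$-action. If $p:P\to\mathbb{R}^N$ is a proper map satisfying the Displacement Bound Condition $\|p(z)-p(\gamma z)\|\le\|\gamma\|_S$ for all $z\in P$, $\gamma\in\Gamma$, then there exists a continuous map $\alpha:X\times P\to\mathbb{R}^N$ satisfying: (L1) $\alpha$ is invariant under the diagonal $\Gamma$-action on $X\times P$; (L2) $\alpha|_{\{x\}\times P}$ is proper for every $x\in X$; (L3) $\alpha|_{X\times\{z\}}$ is 1-Lipschitz for every $z\in P$.
   Context: $\|\gamma\|_S$ denotes the word length of $\gamma$ with respect to $S$. *)

(* Defs.v *)
From HB Require Import structures.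
From mathcomp Require Import all_boot all_order all_algebra.
From mathcomp Require Import all_classical all_reals all_analysis.
From mathcomp Require monoid.

Set Implicit Arguments. Unset Strict Implicit. Unset Printing Implicit Defensive.
Import Order.TTheory GRing.Theory Num.Theory numFieldNormedType.Exports.
Local Open Scope classical_set_scope.
Local Open Scope ring_scope.

Section Defs.

Variable G : monoid.Group.type.

Local Notation gmul := (@monoid.mul G).
Local Notation gone := (@monoid.one G).
Local Notation ginv := (@monoid.inv G).

Definition word_prod (w : seq G) : G := foldr gmul gone w.

Definition is_word (S : set G) (g : G) (w : seq G) : Prop :=
  (forall i, (i < size w)%N -> S (nth gone w i)) /\ word_prod w = g.

Definition finite_symmetric_generating (S : set G) : Prop :=
  [/\ finite_set S, (forall s, S s -> S (ginv s)) & forall g, exists w, is_word S g w].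

(* word length ||g||_S : the least length of a word in S representing g
   (0 by convention if no such word exists, which never happens for a generating set) *)
Definition word_length (S : set G) (g : G) : nat :=
  match pselect (exists n, `[< exists w, is_word S g w /\ size w = n >]) with
  | left h => ex_minn h
  | right _ => 0%N
  end.

Definition is_action (T : Type) (act : G -> T -> T) : Prop :=
  (forall x, act gone x = x) /\ (forall g h x, act (gmul g h) x = act g (act h x)).

Definition proper_action (T : topologicalType) (act : G -> T -> T) : Prop :=
  forall K : set T, compact K -> finite_set [set g | (act g @` K) `&` K !=set0].

Definition cocompact_action (T : topologicalType) (act : G -> T -> T) : Prop :=
  exists K : set T, compact K /\ forall x, exists g, (act g @` K) x.

Definition free_action (T : Type) (act : G -> T -> T) : Prop :=
  forall g x, act g x = x -> g = gone.

End Defs.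

Definition proper_map (T U : topologicalType) (f : T -> U) : Prop :=
  continuous f /\ forall K : set U, compact K -> compact (f @^-1` K).

Section MetricDefs.
Variable R : realType.

Definition enorm (N : nat) (v : 'rV[R]_N) : R :=
  Num.sqrt (\sum_(i < N) v ord0 i ^+ 2).

Variable X : metricType R.

Definition proper_metric_space : Prop :=
  forall (x : X) (r : R), compact [set y | mdist x y <= r].

Definition geodesic_space : Prop :=
  forall x y : X, exists c : R -> X,
    [/\ c 0 = x, c (mdist x y) = y &
        forall s t, 0 <= s <= mdist x y -> 0 <= t <= mdist x y ->
          mdist (c s) (c t) = `|s - t|].

Definition isometric_action (G : monoid.Group.type) (act : G -> X -> X) : Prop :=
  forall g x y, mdist (act g x) (act g y) = mdist x y.

End MetricDefs.

(* Main.v *)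
Require Import Defs.
From HB Require Import structures.
From mathcomp Require Import all_boot all_order all_algebra.
From mathcomp Require Import all_classical all_reals all_analysis.
From mathcomp Require monoid.
From mathcomp Require Import ring lra.
Import Order.TTheory GRing.Theory Num.Theory numFieldNormedType.Exports.
Local Open Scope classical_set_scope.
Local Open Scope ring_scope.

Section Words.
Variables (G : monoid.Group.type) (S : set G).
Local Notation gmul := (@monoid.mul G).
Local Notation gone := (@monoid.one G).
Local Notation ginv := (@monoid.inv G).
Hypothesis Hgen : finite_symmetric_generating S.

Lemma word_prod_cat (w1 w2 : seq G) :
  word_prod (w1 ++ w2) = gmul (word_prod w1) (word_prod w2).
Proof.
rewrite /word_prod; elim: w1 => [|a w IH] /=; first by rewrite monoid.mul1g.
by rewrite IH monoid.mulgA.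
Qed.

Lemma wl_spec g : exists w, is_word S g w /\ size w = word_length S g.
Proof.
rewrite /word_length; case: pselect => [h|nh].
  by case: (ex_minnP h) => n /asboolP [w [Hw Hs]] _; exists w.
exfalso; have [_ _ Hg] := Hgen; case: (Hg g) => w Hw; apply: nh.
by exists (size w); apply/asboolP; exists w.
Qed.

Lemma wl_le g w : is_word S g w -> (word_length S g <= size w)%N.
Proof.
rewrite /word_length; case: pselect => [h|nh] Hw; last by [].
by case: (ex_minnP h) => n _ Hmin; apply: Hmin; apply/asboolP; exists w.
Qed.

Lemma wl_mul g h : (word_length S (gmul g h) <= word_length S g + word_length S h)%N.
Proof.
have [w1 [[H1 P1] S1]] := wl_spec g.
have [w2 [[H2 P2] S2]] := wl_spec h.
apply: leq_trans (@wl_le _ (w1 ++ w2) _) _; last by rewrite size_cat S1 S2.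
split; last by rewrite word_prod_cat P1 P2.
move=> i; rewrite size_cat nth_cat => Hi; case: ltnP => Hi1; first exact: H1.
by apply: H2; rewrite ltn_subLR.
Qed.

End Words.
Section Dist.
Variables (R : realType) (X : metricType R).

Lemma mdist_tri (a b c : X) : mdist a c <= mdist a b + mdist b c.
Proof. exact: metric_triangle. Qed.

Lemma mdist_diff (a y t : X) : `|mdist a y - mdist a t| <= mdist y t.
Proof.
have h1 := mdist_tri a y t; have h2 := mdist_tri a t y.
have h3 := metric_sym y t.
rewrite ler_norml; apply/andP; split; lra.
Qed.

Lemma mdist_cont (a : X) : continuous (fun y : X => (mdist a y : R^o)).
Proof.
move=> y; apply/cvgrPdist_lt => e e0.
apply/metricType_numDomainType.nbhs_mdistP; exists e => //= t ht.
exact: le_lt_trans (mdist_diff a y t) ht.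
Qed.

Lemma compact_dist_bound (K : set X) (a : X) : compact K ->
  exists r : R, 0 <= r /\ forall k, K k -> mdist a k <= r.
Proof.
move=> cK.
have cI : compact ((fun y : X => (mdist a y : R^o)) @` K).
  apply: continuous_compact => //; apply: continuous_subspaceT; exact: mdist_cont.
have [M0 [_ HM]] := compact_bounded cI.
exists (`|M0| + 1); split; first by rewrite addr_ge0.
move=> k Kk; have /= := HM (`|M0| + 1) _ (mdist a k) (ex_intro2 _ _ k Kk erefl).
rewrite (ger0_norm (mdist_ge0 a k)); apply.
have := real_ler_norm (num_real M0); lra.
Qed.

End Dist.

Lemma finite_bound_nat (A : set nat) : finite_set A -> exists M, forall n, A n -> (n <= M)%N.
Proof.
move=> /finite_seqP [s ->]; exists (foldr maxn 0%N s) => n /=.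
elim: s => [|a s IH] //=; rewrite in_cons => /orP [/eqP ->|/IH h].
  exact: leq_maxl.
exact: leq_trans h (leq_maxr _ _).
Qed.

Section SM.
Variables (R : realType) (G : monoid.Group.type) (S : set G) (X : metricType R)
  (actX : G -> X -> X).
Local Notation gmul := (@monoid.mul G).
Local Notation gone := (@monoid.one G).
Local Notation ginv := (@monoid.inv G).
Hypotheses (Hgen : finite_symmetric_generating S) (Hprop : proper_metric_space X)
  (Hgeo : geodesic_space X) (Hact : is_action actX) (Hpa : proper_action actX)
  (Hcc : cocompact_action actX) (Hiso : isometric_action actX).

Lemma act_inv_l h y : actX h (actX (ginv h) y) = y.
Proof. by rewrite -(proj2 Hact) monoid.mulgV (proj1 Hact). Qed.

Lemma dist_inv (h : G) (a b : X) : mdist a (actX (ginv h) b) = mdist (actX h a) b.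
Proof. by rewrite -(Hiso h) act_inv_l. Qed.

Lemma cover_radius (x0 : X) : exists r : R, 0 <= r /\ forall x, exists h, mdist x (actX h x0) <= r.
Proof.
have [K [cK cov]] := Hcc.
have [r [r0 Hr]] := @compact_dist_bound _ _ K x0 cK.
exists r; split => // x; have [h [k Kk <-]] := cov x; exists h.
by rewrite Hiso metric_sym; apply: Hr.
Qed.

Lemma finite_near (x0 x : X) (rho : R) :
  finite_set [set g | mdist x (actX g x0) <= rho].
Proof.
set B := [set y | mdist x y <= `|rho| + mdist x x0].
apply: (@sub_finite_set _ _ [set g | (actX g @` B) `&` B !=set0]); last first.
  by apply: Hpa; apply: Hprop.
move=> g /= hg; exists (actX g x0); split.
  exists x0 => //; rewrite /B /=; have := normr_ge0 rho; lra.
rewrite /B /=; have := mdist_ge0 x x0; have := ler_norm rho; lra.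
Qed.

Lemma SM (x0 : X) : exists L : R, 0 < L /\
  forall g, (word_length S g)%:R <= L * mdist x0 (actX g x0) + L.
Proof.
have [r [r0 Hr]] := cover_radius x0.
set F := [set f | mdist x0 (actX f x0) <= 3 * r + 1].
have [M HM] := @finite_bound_nat _ (finite_image (word_length S) (finite_near x0 x0 (3 * r + 1))).
have small g : mdist x0 (actX g x0) <= 2 * r + 1 -> (word_length S g <= M)%N.
  move=> h; apply: HM; exists g => //=; lra.
have claim : forall k : nat, forall g, mdist x0 (actX g x0) <= k%:R ->
    (word_length S g <= k.+1 * M)%N.
  elim=> [|k IH] g Hg.
    by rewrite mul1n; apply: small; have := mdist_ge0 x0 (actX g x0); lra.
  have [Hs|Hb] := lerP (mdist x0 (actX g x0)) (2 * r + 1).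
    by apply: leq_trans (small _ Hs) _; rewrite leq_pmull.
  set D := mdist x0 (actX g x0) in Hg Hb *.
  have [c [c0 cD cc]] := Hgeo x0 (actX g x0).
  set t := D - (2 * r + 1).
  have t0 : 0 <= t <= D by apply/andP; rewrite /t; split; lra.
  have D0 : 0 <= D <= D by apply/andP; split; lra.
  have z0 : (0:R) <= 0 <= D by rewrite lexx; have := mdist_ge0 x0 (actX g x0); lra.
  have dxy : mdist x0 (c t) = t.
    by rewrite -{1}c0 (cc _ _ z0 t0) sub0r normrN ger0_norm //; lra.
  have dyg : mdist (c t) (actX g x0) = 2 * r + 1.
    rewrite -cD (cc _ _ t0 D0) /t ler0_norm; lra.
  have [h Hh] := Hr (c t).
  have dh : mdist x0 (actX h x0) <= k%:R.
    have := @mdist_tri _ _ x0 (c t) (actX h x0); rewrite -natr1 in Hg; rewrite dxy /t; lra.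
  have Ih := IH h dh.
  set f := gmul (ginv h) g.
  have df : mdist x0 (actX f x0) <= 2 * r + 1 + r.
    rewrite /f (proj2 Hact) dist_inv.
    have := @mdist_tri _ _ (actX h x0) (c t) (actX g x0); rewrite metric_sym in Hh; lra.
  have Hf : (word_length S f <= M)%N by apply: HM; exists f => //=; lra.
  have -> : g = gmul h f by rewrite /f monoid.mulVKg.
  apply: leq_trans (@wl_mul _ _ Hgen h f) _.
  by rewrite mulSn addnC leq_add.
exists (2 * M%:R + 1); split; first by have := ler0n R M; lra.
move=> g; set D := mdist x0 (actX g x0).
have D0 : 0 <= D by apply: mdist_ge0.
have hk := truncnS_gt D.
have hk2 : (Num.truncn D)%:R <= D by rewrite truncn_le.
have := claim (Num.truncn D).+1 g (ltW hk).
rewrite -(ler_nat R) natrM -!natr1 => h; apply: le_trans h _.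
have := ler0n R M; nra.
Qed.

End SM.

Section Enorm.
Variables (R : realType) (N : nat).

Lemma coord_le_enorm (v : 'rV[R]_N) i : `|v ord0 i| <= enorm v.
Proof.
rewrite /enorm -sqrtr_sqr; apply: ler_wsqrtr.
rewrite (bigD1 i) //= lerDl; apply: sumr_ge0 => j _; exact: sqr_ge0.
Qed.

Lemma enorm_le (v : 'rV[R]_N) B : 0 <= B -> (forall i, `|v ord0 i| <= B) ->
  enorm v <= (N%:R + 1) * B.
Proof.
move=> B0 hv; have N0 := ler0n R N.
rewrite /enorm -[X in _ <= X]ger0_norm; last by apply: mulr_ge0 => //; lra.
rewrite -sqrtr_sqr; apply: ler_wsqrtr.
apply: (@le_trans _ _ (\sum_(i < N) B ^+ 2)).
  apply: ler_sum => i _; have := hv i; rewrite ler_norml => /andP[h1 h2]; nra.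
rewrite sumr_const card_ord -mulr_natr; nra.
Qed.

End Enorm.

Lemma continuous_row (R : realType) (T : topologicalType) n (f : 'I_n -> T -> R) :
  (forall i, continuous (f i)) -> continuous (fun t => \row_i f i t : 'rV[R]_n).
Proof.
move=> hf t A [Pf hP sPA].
apply: (filterS _ (@filter_forall _ ('I_1 * 'I_n)%type
  (fun ij s => Pf ij.1 ij.2 ((\row_i f i s) ij.1 ij.2)) _ _ _)).
  by move=> s hs; apply: sPA => i j; exact: (hs (i, j)).
move=> [i j]; have := hP i j; rewrite mxE => h.
have h3 : \forall s \near t, Pf i j (f j s) := hf j t _ h.
near=> s; rewrite /= mxE; near: s; exact: h3.
Unshelve. all: by end_near. Qed.

Lemma cont_scale (R : realType) (T : topologicalType) (c : R) (f : T -> R) :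
  continuous f -> continuous (fun t => c * f t).
Proof. by move=> hf x; apply: (@continuousM R T (fun=> c) f x); [exact: cvg_cst | exact: hf]. Qed.

Section Main.
Variables (R : realType) (G : monoid.Group.type) (S : set G)
  (X : metricType R) (actX : G -> X -> X)
  (P : topologicalType) (actP : G -> P -> P)
  (N : nat) (p : P -> 'rV[R]_N).
Local Notation gmul := (@monoid.mul G).
Local Notation gone := (@monoid.one G).
Local Notation ginv := (@monoid.inv G).
Hypotheses (HactX : is_action actX) (HisoX : isometric_action actX)
  (HactP : is_action actP) (HcontP : forall g, continuous (actP g))
  (Hpa : proper_action actX) (Hprop : proper_metric_space X)
  (Hp : proper_map p)
  (Hdisp : forall (z : P) (g : G), enorm (p z - p (actP g z)) <= (word_length S g)%:R).
Variables (x0 : X) (L : R).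
Hypotheses (L0 : 0 < L)
  (HL : forall g, (word_length S g)%:R <= L * mdist x0 (actX g x0) + L).

Definition term i g x z := p (actP (ginv g) z) ord0 i + 2 * L * mdist x (actX g x0).
Definition Fc i x z := inf (range (fun g => term i g x z)).

Lemma term_lb i g x z :
  p z ord0 i - L * mdist x x0 - L + L * mdist x (actX g x0) <= term i g x z.
Proof.
have h1 := Hdisp z (ginv g).
have h2 := @coord_le_enorm _ _ (p z - p (actP (ginv g) z)) i.
rewrite !mxE in h2.
have h3 := HL (ginv g).
rewrite (@dist_inv R G X actX HactX HisoX) in h3.
have h4 := @mdist_tri _ _ (actX g x0) x x0.
rewrite (metric_sym (actX g x0) x) in h4.
have h5 : L * mdist (actX g x0) x0 <= L * mdist x (actX g x0) + L * mdist x x0.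
  by rewrite -mulrDr ler_wpM2l // ltW.
move: h2; rewrite ler_norml => /andP [h6 h7].
rewrite /term; lra.
Qed.

Lemma term1 i x z : term i gone x z = p z ord0 i + 2 * L * mdist x x0.
Proof. by rewrite /term monoid.invg1 (proj1 HactP) (proj1 HactX). Qed.

Lemma Fc_lbound i x z : has_lbound (range (fun g => term i g x z)).
Proof.
exists (p z ord0 i - L * mdist x x0 - L) => _ [g _ <-].
have := term_lb i g x z; have := mdist_ge0 x (actX g x0).
have := ltW L0; nra.
Qed.

Lemma Fc_le i g x z : Fc i x z <= term i g x z.
Proof. by apply: ge_inf; [exact: Fc_lbound | exists g]. Qed.

Lemma Fc_ge i x z lb : (forall g, lb <= term i g x z) -> lb <= Fc i x z.
Proof.
move=> h; apply: lb_le_inf; first by exists (term i gone x z), gone.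
by move=> _ [g _ <-].
Qed.

Lemma Fc_near i x z : `|Fc i x z - p z ord0 i| <= 2 * L * mdist x x0 + L.
Proof.
have u := Fc_le i gone x z; rewrite term1 in u.
have l : p z ord0 i - L * mdist x x0 - L <= Fc i x z.
  apply: Fc_ge => g; have := term_lb i g x z; have := mdist_ge0 x (actX g x0).
  have := ltW L0; nra.
have := mdist_ge0 x x0; have := ltW L0.
rewrite ler_norml => ? ?; apply/andP; split; nra.
Qed.

Lemma Fc_lip i x y z : Fc i x z <= Fc i y z + 2 * L * mdist x y.
Proof.
rewrite -lerBlDr; apply: Fc_ge => g; rewrite lerBlDr.
apply: le_trans (Fc_le i g x z) _; rewrite /term.
have := @mdist_tri _ _ x y (actX g x0); have := ltW L0; nra.
Qed.

Lemma Fc_lip_abs i x y z : `|Fc i x z - Fc i y z| <= 2 * L * mdist x y.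
Proof.
have := Fc_lip i x y z; have := Fc_lip i y x z; rewrite (metric_sym y x).
rewrite ler_norml => ? ?; apply/andP; split; lra.
Qed.

Lemma Fc_inv i h x z : Fc i (actX h x) (actP h z) = Fc i x z.
Proof.
rewrite /Fc; congr inf; apply/seteqP; split => _ [g _ <-].
  exists (gmul (ginv h) g) => //; rewrite /term monoid.invgM monoid.invgK.
  rewrite (proj2 HactP).
  by rewrite (proj2 HactX) (@dist_inv R G X actX HactX HisoX).
exists (gmul h g) => //; rewrite /term monoid.invgM.
rewrite (proj2 HactP) -(proj2 HactP (ginv h)) monoid.mulVg (proj1 HactP).
by rewrite (proj2 HactX) HisoX.
Qed.

Definition fmin (f : G -> R) (b : R) (s : seq G) :=
  foldr (fun g acc => Num.min (f g) acc) b s.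

Lemma fmin_le f b s : fmin f b s <= b /\ forall g, g \in s -> fmin f b s <= f g.
Proof.
elim: s => [|a s [IH1 IH2]] /=; first by split.
split; first by rewrite ge_min IH1 orbT.
move=> g; rewrite in_cons => /orP [/eqP ->|hg]; first by rewrite ge_min lexx.
by rewrite ge_min IH2 // orbT.
Qed.

Lemma fmin_attain f b s : fmin f b s = b \/ exists g, fmin f b s = f g.
Proof.
elim: s => [|a s IH] /=; first by left.
case: (leP (f a) (fmin f b s)) => h.
  by right; exists a.
exact: IH.
Qed.

Lemma fmin_cont (f : G -> P -> R) (b : P -> R) s :
  continuous b -> (forall g, continuous (f g)) ->
  continuous (fun z => fmin (fun g => f g z) (b z) s).
Proof.
move=> hb hf; elim: s => [|a s IH] //= z.
exact: (continuous_min (hf a z) (IH z)).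
Qed.

Lemma term_cont i g x : continuous (fun z => term i g x z).
Proof.
move=> z.
have -> : (fun z => term i g x z) =
  (fun z => p (actP (ginv g) z) ord0 i) + (fun=> 2 * L * mdist x (actX g x0)).
  by apply/funext.
apply: continuousD; last exact: cst_continuous.
apply: (@continuous_comp _ _ _ (actP (ginv g)) (fun w => p w ord0 i) z (HcontP _ z)).
apply: (@continuous_comp _ _ _ p (fun v : 'rV[R]_N => v ord0 i) _ (proj1 Hp _)).
exact: coord_continuous.
Qed.

Lemma Fc_fin i x : exists s : seq G, forall z,
  Fc i x z = fmin (fun g => term i g x z) (term i gone x z) s.
Proof.
set rho := 3 * mdist x x0 + 1.
have /finite_seqP [s hs] := @finite_near _ _ _ _ Hprop Hpa x0 x rho.
exists s => z; apply/eqP; rewrite eq_le; apply/andP; split.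
  by case: (fmin_attain (fun g => term i g x z) (term i gone x z) s) => [->|[g ->]];
    exact: Fc_le.
apply: Fc_ge => g.
have [fb fs] := fmin_le (fun g => term i g x z) (term i gone x z) s.
case: (lerP (mdist x (actX g x0)) rho) => hg.
  apply: fs; have : [set g | mdist x (actX g x0) <= rho] g by [].
  by rewrite hs.
apply: le_trans fb _; rewrite term1; have := term_lb i g x z.
have : L * rho < L * mdist x (actX g x0) by rewrite ltr_pM2l.
rewrite /rho; lra.
Qed.

Lemma Fc_cont_z i x : continuous (fun z => Fc i x z).
Proof.
have [s hs] := Fc_fin i x.
have -> : (fun z => Fc i x z) =
  (fun z => fmin (fun g => term i g x z) (term i gone x z) s) by apply/funext.
by apply: fmin_cont => [|g]; exact: term_cont.
Qed.

Lemma Fc_cont i : continuous (fun q : X * P => Fc i q.1 q.2).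
Proof.
move=> [x z]; apply/cvgrPdist_lt => e e0.
have e2 : 0 < e / 2 by rewrite divr_gt0.
have hz := Fc_cont_z i x z.
move/cvgrPdist_lt: hz => /(_ _ e2) hz.
have e4 : 0 < e / (4 * L) by rewrite divr_gt0 // mulr_gt0.
exists ([set y | mdist x y < e / (4 * L)], [set w | `|Fc i x z - Fc i x w| < e / 2]).
  split => /=; last exact: hz.
  by apply/metricType_numDomainType.nbhs_mdistP; exists (e / (4 * L)).
move=> [y w] [/= hy hw].
have hl := Fc_lip_abs i x y w.
have he : e = 4 * L * (e / (4 * L)).
  by rewrite mulrC divfK //; apply: lt0r_neq0; apply: mulr_gt0.
have hd : 2 * L * mdist x y < e / 2.
  set u := e / (4 * L) in hy he *; rewrite he; have := mdist_ge0 x y; have := L0; nra.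
move: hw hl; rewrite !ltr_norml ler_norml => /andP [a1 a2] /andP [b1 b2].
apply/andP; split; lra.
Qed.

Lemma main_construction : exists alpha : X * P -> 'rV[R]_N,
    [/\ continuous alpha,
        (forall g x z, alpha (actX g x, actP g z) = alpha (x, z)),
        (forall x, proper_map (fun z => alpha (x, z))) &
        (forall z x y, enorm (alpha (x, z) - alpha (y, z)) <= mdist x y)].
Proof.
have N0 := ler0n R N.
have [K [hK K0]] : exists K : R, K = (N%:R + 1) * (2 * L) /\ 0 < K.
  by eexists; split; first reflexivity; rewrite mulr_gt0 // ?mulr_gt0 // ltr_wpDl.
have [c [cK c0]] : exists c : R, c * K = 1 /\ 0 < c.
  by exists K^-1; split; [rewrite mulVf // gt_eqF | rewrite invr_gt0].
exists (fun q => \row_i (c * Fc i q.1 q.2)); split.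
- by apply: continuous_row => i; apply: cont_scale; exact: Fc_cont.
- by move=> g x z; apply/rowP => i; rewrite !mxE /= Fc_inv.
- move=> x; split.
    by apply: continuous_row => i; apply: cont_scale; exact: Fc_cont_z.
  move=> A cA.
  have clA : closed A by apply: compact_closed => //; exact: norm_hausdorff.
  have [M0 [_ HM]] := compact_bounded cA.
  have hM0 : M0 < `|M0| + 1 by have := real_ler_norm (num_real M0); lra.
  move: (`|M0| + 1) hM0 => B hM0.
  have hB : forall v, A v -> forall i, `|v ord0 i| <= B.
    move=> v Av i; have hv := HM B hM0 v Av.
    apply: le_trans hv; rewrite [leRHS]/Num.norm /= mx_normrE.
    exact: (le_bigmax 0 (fun ij : 'I_1 * 'I_N => `|v ij.1 ij.2|) (ord0, i)).
  have [B' hB'] : exists B' : R, B' = K * B + 2 * L * mdist x x0 + L by eexists.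
  have cQ : compact [set v : 'rV[R]_N | forall i, `[- B', B']%classic (v ord0 i)].
    by apply: (@rV_compact _ _ (fun=> `[- B', B']%classic)) => _; exact: segment_compact.
  apply: (subclosed_compact _ ((proj2 Hp) _ cQ)).
    apply: preimage_closed => // z _.
    by apply: continuous_row => i; apply: cont_scale; exact: Fc_cont_z.
  move=> z /= Az i; have := hB _ Az i; rewrite mxE /= => hc.
  have hF : `|Fc i x z| <= K * B.
    have -> : Fc i x z = K * (c * Fc i x z) by rewrite mulrA (mulrC K) cK mul1r.
    by rewrite normrM gtr0_norm // ler_wpM2l // ltW.
  have hn := Fc_near i x z.
  rewrite in_itv /=; move: hF hn; rewrite !ler_norml => /andP [a1 a2] /andP [b1 b2].
  apply/andP; split; rewrite hB'; lra.
- move=> z x y.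
  have := @enorm_le R N (\row_i (c * Fc i x z) - \row_i (c * Fc i y z)) (c * (2 * L * mdist x y)).
  move=> h; apply: le_trans (h _ _) _.
  + by apply: mulr_ge0; [exact: ltW | apply: mulr_ge0; [apply: mulr_ge0 => //; exact: ltW | exact: mdist_ge0]].
  + move=> i; rewrite !mxE -mulrBr normrM gtr0_norm //.
    by rewrite ler_pM2l // Fc_lip_abs.
  have -> : (N%:R + 1) * (c * (2 * L * mdist x y)) = c * K * mdist x y by rewrite hK; ring.
  by rewrite cK mul1r.
Qed.

End Main.


Theorem proposition3 (R : realType) (G : monoid.Group.type) (S : set G)
  (X : metricType R) (actX : G -> X -> X)
  (P : topologicalType) (actP : G -> P -> P)
  (N : nat) (p : P -> 'rV[R]_N) :
  finite_symmetric_generating S ->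
  proper_metric_space X -> geodesic_space X ->
  is_action actX -> free_action actX -> proper_action actX ->
  cocompact_action actX -> isometric_action actX ->
  is_action actP -> (forall g, continuous (actP g)) -> proper_action actP ->
  proper_map p ->
  (forall (z : P) (g : G), enorm (p z - p (actP g z)) <= (word_length S g)%:R) ->
  exists alpha : X * P -> 'rV[R]_N,
    [/\ continuous alpha,
        (forall g x z, alpha (actX g x, actP g z) = alpha (x, z)),
        (forall x, proper_map (fun z => alpha (x, z))) &
        (forall z x y, enorm (alpha (x, z) - alpha (y, z)) <= mdist x y)].
Proof.
move=> Hgen Hprop Hgeo HactX Hfree Hpa Hcc HisoX HactP HcontP HpaP Hp Hdisp.
case: (pselect (exists x : X, True)) => [[x0 _]|nX]; last first.
  exists (fun=> 0); split.
  - by move=> q; exact: cst_continuous.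
  - by [].
  - by move=> x; exfalso; apply: nX; exists x.
  - by move=> z x; exfalso; apply: nX; exists x.
have [L [L0 HL]] : exists L : R, 0 < L /\
    forall g, (word_length S g)%:R <= L * mdist x0 (actX g x0) + L.
  by eapply SM; eassumption.
by eapply main_construction; eassumption.
Qed.
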